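(* For a natural number $j$ and real $X\ge1$, let $N_j^*(X)$ be the number of tuples $(d_1,\dots,d_j)$ of natural numbers $d_k\ge1$ with $\prod_{k=1}^j(3d_k)\le X$. Let $j\ge2$. Then $N_j^*(X)=0$ for $X<3^j$, and for $X\ge 3^j$, $$N_j^*(X)\le \frac{1}{(j-1)!}\,\frac13\Big(\frac23\Big)^{j-1}X\,\Big(\log\Big(\frac13\Big(\frac23\Big)^{j-1}X\Big)\Big)^{j-1}.$$ *)

(* Defs.v *)
From HB Require Import structures.
From mathcomp Require Import all_boot all_order all_algebra.
From mathcomp Require Import all_classical all_reals all_analysis.
Set Implicit Arguments. Unset Strict Implicit. Unset Printing Implicit Defensive.
Import Order.TTheory GRing.Theory Num.Theory.
Local Open Scope ring_scope.

(* Every such d_k satisfies d_k <= X, so we may enumerate tuples with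
   entries in {0,..,truncn X} (truncn X = floor X for X >= 0); the
   restriction is therefore no loss. *)
Definition Nstar (R : realType) (j : nat) (X : R) : nat :=
  #|[set d : {ffun 'I_j -> 'I_(Num.truncn X).+1} |
      [forall k, (0 < (d k : nat))%N] &&
      (((\prod_(k < j) (3 * (d k : nat)))%N)%:R <= X)]|.

(* Main.v *)
Require Import Defs.
From HB Require Import structures.
From mathcomp Require Import all_boot all_order all_algebra.
From mathcomp Require Import all_classical all_reals all_analysis.
From mathcomp Require Import ring lra.
Import Order.TTheory GRing.Theory Num.Theory.
Local Open Scope ring_scope.

Lemma powdiff (R : realFieldType) (m : nat) (a b : R) : 0 <= b -> b <= a ->
  m.+1%:R * b ^+ m * (a - b) <= a ^+ m.+1 - b ^+ m.+1.
Proof.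
move=> b0 ba; elim: m => [|m IH]; first by rewrite expr0 mulr1 mul1r !expr1.
have p0 : 0 <= b ^+ m by rewrite exprn_ge0.
have c0 : 0 <= m%:R :> R by rewrite ler0n.
move: IH; rewrite !exprS -!mulrA -!natr1 => IH.
set p := b ^+ m in IH p0 *; set A := a ^+ m in IH *.
have aA : 0 <= a by exact: le_trans ba.
have ab0 : 0 <= a - b by rewrite subr_ge0.
have h1 : 0 <= (m%:R + 1) * (p * (a - b)) by rewrite !mulr_ge0 // addr_ge0.
have h2 : a * ((m%:R + 1) * (p * (a - b))) <= a * (a * A - b * p) by rewrite ler_wpM2l.
have h3 : b * ((m%:R + 1) * (p * (a - b))) <= a * ((m%:R + 1) * (p * (a - b))) by rewrite ler_wpM2r.
nra.
Qed.

Lemma ln_step (R : realType) (K : nat) : (1 <= K)%N ->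
  (K.+1%:R)^-1 <= ln (K.+1%:R : R) - ln (K%:R).
Proof.
move=> K1.
have Kp : 0 < K%:R :> R by rewrite ltr0n.
have K1p : 0 < K.+1%:R :> R by rewrite ltr0n.
have h : -1 < - (K.+1%:R : R)^-1.
  rewrite ltrN2 invf_lt1 // ltr1n ltnS //.
have := le_ln1Dx h.
have -> : 1 + - (K.+1%:R : R)^-1 = K%:R / K.+1%:R.
  by rewrite -natr1; field; rewrite natr1 gt_eqF.
rewrite ln_div ?posrE // => HH. by rewrite -lerN2 opprB.
Qed.

Lemma ln2_ge (R : realType) : 1 / 2 <= ln (2 : R).
Proof.
have h : -1 < - (2 : R)^-1 by lra.
have := le_ln1Dx h.
have -> : 1 + - (2 : R)^-1 = 2^-1 by field.
rewrite lnV ?posrE //; lra.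
Qed.

Lemma sum_bound (R : realType) (m K : nat) (L : R) : (1 <= K)%N -> ln (K%:R) <= L ->
  \sum_(1 <= d < K.+1) (d%:R)^-1 * (L - ln (d%:R)) ^+ m <=
  L ^+ m + (L ^+ m.+1 - (L - ln K%:R) ^+ m.+1) / m.+1%:R.
Proof.
elim: K => [//|K IH] _ hL.
case: (posnP K) => [->|K0].
  rewrite big_nat1 invr1 mul1r ln1 subr0 subrr mul0r addr0 //.
have lK : ln (K%:R) <= ln (K.+1%:R) :> R.
  by rewrite ler_ln ?posrE ?ltr0n // ler_nat.
rewrite big_nat_recr //= .
have := IH K0 (le_trans lK hL).
set b := L - ln K.+1%:R; set a := L - ln K%:R.
have b0 : 0 <= b by rewrite /b subr_ge0.
have st := @ln_step R K K0.
have ab : a - b = ln (K.+1%:R) - ln K%:R by rewrite /a /b; lra.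
have ba : b <= a by rewrite -subr_ge0 ab; apply: le_trans st; rewrite invr_ge0.
have pd := @powdiff R m a b b0 ba.
have p0 : 0 <= b ^+ m by rewrite exprn_ge0.
have mp : 0 < m.+1%:R :> R by rewrite ltr0n.
move=> IH'.
suff : (K.+1%:R)^-1 * b ^+ m <= (a ^+ m.+1 - b ^+ m.+1) / m.+1%:R.
  move=> h; apply: le_trans (lerD IH' h) _.
  rewrite -addrA lerD2l -mulrDl ler_pM2r ?invr_gt0 //.
  lra.
rewrite ler_pdivlMr //.
apply: le_trans pd.
rewrite ab.
have cp : 0 <= m.+1%:R * b ^+ m by rewrite mulr_ge0 ?ler0n.
have := ler_wpM2r cp st.
set u := K.+1%:R^-1; set d := ln _ - ln _.
have -> : u * b ^+ m * m.+1%:R = u * (m.+1%:R * b ^+ m) by ring.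
move=> hh; apply: (le_trans hh); by rewrite mulrC.
Qed.


Fixpoint cnt (j K : nat) : nat :=
  match j with
  | 0 => 1%N
  | j'.+1 => (\sum_(1 <= d < K.+1) cnt j' (K %/ d))%N
  end.

Lemma final_ineq (R : realType) (m : nat) (L : R) : 0 <= L ->
  L ^+ m + L ^+ m.+1 / m.+1%:R <= 2 * (L + ln 2) ^+ m.+1 / m.+1%:R.
Proof.
move=> L0.
have l2 := ln2_ge R.
have l20 : 0 <= ln (2:R) by lra.
have pd := @powdiff R m (L + ln 2) L L0 ltac:(lra).
have mp : 0 < m.+1%:R :> R by rewrite ltr0n.
have p0 : 0 <= L ^+ m by rewrite exprn_ge0.
have p1 : 0 <= L ^+ m.+1 by rewrite exprn_ge0.
rewrite ler_pdivlMr // mulrDl divfK ?gt_eqF //.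
move: pd; set A := (L + ln 2) ^+ m.+1; set B := L ^+ m.+1; set p := L ^+ m.
set c := m.+1%:R.
have -> : L + ln 2 - L = ln 2 by ring.
move=> pd.
have h : c * p * (1/2) <= c * p * ln 2 by rewrite ler_wpM2l // mulr_ge0 // ltW.
rewrite (mulrC p c).
move: h pd; set q := c * p * ln 2; have -> : c * p * (1/2) = (c * p) / 2 by ring.
set r := c * p => h pd.
have r0 : 0 <= r by rewrite /r mulr_ge0 // ltW.
have B0 : 0 <= B by [].
lra.
Qed.

Lemma cnt_bound (R : realType) (m K : nat) : (1 <= K)%N ->
  (cnt m.+1 K)%:R <= 2 ^+ m / m`!%:R * K%:R * ln (2 ^+ m * K%:R) ^+ m :> R.
Proof.
elim: m K => [|m IH] K K1.
  rewrite /= expr0 fact0 !mul1r invr1 mul1r expr0 mulr1.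
  by rewrite sum_nat_const_nat subn1 /= muln1.
set c : R := 2 ^+ m / m`!%:R.
set L : R := ln (2 ^+ m * K%:R).
have c0 : 0 <= c by rewrite /c divr_ge0 // ?exprn_ge0 // ler0n.
have Kp : 0 < K%:R :> R by rewrite ltr0n.
have p2 : 1 <= 2 ^+ m :> R by rewrite exprn_ege1 // ler1n.
have p2p : 0 < 2 ^+ m :> R by rewrite exprn_gt0.
have lKL : ln K%:R <= L.
  rewrite /L ler_ln ?posrE ?mulr_gt0 //.
  by rewrite ler_peMl // ltW.
have L0 : 0 <= L by apply: le_trans lKL; rewrite ln_ge0 // ler1n.
have step1 : (cnt m.+2 K)%:R <=
    \sum_(1 <= d < K.+1) c * K%:R * ((d%:R)^-1 * (L - ln (d%:R)) ^+ m).
  rewrite /= natr_sum; apply: ler_sum_nat => d /andP [d1 dK].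
  have dp : 0 < d%:R :> R by rewrite ltr0n.
  have k1 : (1 <= K %/ d)%N by rewrite leq_divRL // mul1n -ltnS.
  apply: le_trans (IH _ k1) _.
  have kK : (K %/ d)%:R <= K%:R / d%:R :> R.
    by rewrite ler_pdivlMr // -natrM ler_nat leq_trunc_div.
  have kp : 0 < (K %/ d)%:R :> R by rewrite ltr0n.
  have l0 : 0 <= ln (2 ^+ m * (K %/ d)%:R : R).
    rewrite ln_ge0 //; apply: le_trans p2 _; rewrite ler_peMr ?ler1n // ltW.
  have lk : ln (2 ^+ m * (K %/ d)%:R : R) <= L - ln d%:R.
    rewrite /L -ln_div ?posrE ?mulr_gt0 //.
    rewrite ler_ln ?posrE ?mulr_gt0 ?invr_gt0 //; try by exact: p2p.
    by rewrite -mulrA ler_pM2l //; exact: p2p.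
  change (c * (K %/ d)%:R * ln (2 ^+ m * (K %/ d)%:R) ^+ m <= c * K%:R * ((d%:R)^-1 * (L - ln d%:R) ^+ m)).
  rewrite -(mulrA c) -(mulrA c) ler_wpM2l // mulrA.
  rewrite ler_pM //.
    by rewrite exprn_ge0.
  by apply: lerXn2r; rewrite ?nnegrE // ?(le_trans l0 lk).
apply: le_trans step1 _.
rewrite -big_distrr /=.
have sb := @sum_bound R m K L K1 lKL.
have Lk0 : 0 <= (L - ln K%:R) ^+ m.+1 by rewrite exprn_ge0 // subr_ge0.
have sb2 : \sum_(1 <= d < K.+1) (d%:R)^-1 * (L - ln (d%:R)) ^+ m <=
     2 * (L + ln 2) ^+ m.+1 / m.+1%:R.
  apply: le_trans sb _; apply: le_trans (@final_ineq R m L L0).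
  rewrite lerD2l ler_pM2r ?invr_gt0 ?ltr0n //.
  by rewrite lerBlDr lerDl.
have cK0 : 0 <= c * K%:R by rewrite mulr_ge0 // ler0n.
apply: le_trans (ler_wpM2l cK0 sb2) _.
have -> : ln (2 ^+ m.+1 * K%:R) = ln 2 + L :> R.
  by rewrite exprS -mulrA lnM ?posrE // mulr_gt0 //; exact: p2p.
rewrite /c factS natrM exprS.
rewrite le_eqVlt; apply/orP; left; apply/eqP; rewrite (addrC (ln 2)) !exprS.
set P := (L + ln 2) ^+ m; set Q := (2:R) ^+ m; set F := m`!%:R.
have F0 : F != 0 by rewrite /F pnatr_eq0 -lt0n fact_gt0.
field. apply/andP; split; first exact: F0.
have m0 : 0 <= m%:R :> R by rewrite ler0n.
apply/negP => /eqP h; lra.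
Qed.

Local Close Scope ring_scope.

Lemma sum_ord_bound (B K : nat) (g : nat -> nat) :
 (\sum_(x < B) (if (0 < x) && (x <= K) then g x else 0) <= \sum_(1 <= d < K.+1) g d)%N.
Proof.
rewrite -(big_mkord xpredT (fun i => if (0 < i) && (i <= K) then g i else 0)%N).
set f := fun i => if (0 < i) && (i <= K) then g i else 0.
have E : (\sum_(0 <= i < K.+1) f i = \sum_(1 <= d < K.+1) g d)%N.
  rewrite big_ltn // /f /= add0n; apply: eq_big_nat => i /andP[i1 iK].
  by rewrite i1 -ltnS iK.
case: (leqP B K.+1) => hB.
  by rewrite -E (@big_cat_nat _ _ _ B 0 K.+1) //= leq_addr.
rewrite (@big_cat_nat _ _ _ K.+1 0 B) //= ?E; last exact: ltnW.
rewrite -[X in (_ <= X)%N]addn0 leq_add2l leqn0 big_nat_cond; apply/eqP; apply: big1 => i /andP[/andP[Ki _] _].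
by case: ifP => // /andP[_ iK]; rewrite ltnNge iK in Ki.
Qed.

Lemma cardA (B j K : nat) :
  (#|[set d : {ffun 'I_j -> 'I_B} | [forall k, (0 < (d k : nat))%N] &&
      (\prod_(k < j) (d k : nat) <= K)%N]| <= cnt j K)%N.
Proof.
elim: j K => [|j IH] K.
  apply: leq_trans (max_card _) _; by rewrite card_ffun !card_ord.
set A := [set d : {ffun 'I_j.+1 -> 'I_B} | _].
rewrite -sum1_card (partition_big (fun d : {ffun 'I_j.+1 -> 'I_B} => d ord0) predT) //=.
apply: leq_trans (sum_ord_bound B K (fun x => cnt j (K %/ x))).
apply: leq_sum => x _.
rewrite sum1dep_card.
case: ifP => hx; last first.
  rewrite leqn0; apply/eqP/eq_card0 => d; rewrite !inE.
  apply/negP => /andP[/andP[/forallP pos hp] /eqP dx].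
  move: hp; rewrite big_ord_recl dx => hp.
  have r1 : (0 < \prod_(i < j) (d (lift ord0 i) : nat))%N by apply: prodn_gt0.
  move: hx; rewrite -dx pos /= => /negP; apply.
  apply: leq_trans hp; by rewrite -dx leq_pmulr.
case/andP: hx => x0 xK.
set P := [set _ | _].
pose h := fun d : {ffun 'I_j.+1 -> 'I_B} => ([ffun i : 'I_j => d (lift ord0 i)] : {ffun 'I_j -> 'I_B}).
have inj : {in P &, injective h}.
  move=> d1 d2; rewrite !inE => /andP[_ /eqP e1] /andP[_ /eqP e2] e.
  apply/ffunP => i; case: (unliftP ord0 i) => [i'|] ->; last by rewrite e1 e2.
  by have := congr1 (fun f : {ffun 'I_j -> 'I_B} => f i') e; rewrite !ffunE.
rewrite -(card_in_imset inj).
apply: leq_trans (IH (K %/ x)).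
suff sub : h @: P \subset [set d : {ffun 'I_j -> 'I_B} | [forall k, (0 < (d k : nat))%N] &&
      (\prod_(k < j) (d k : nat) <= K %/ x)%N] by exact: subset_leq_card sub.
apply/fintype.subsetP => y /imsetP [d Hd ->].
move: Hd; rewrite !inE => /andP[/andP[/forallP pos hp] /eqP dx].
apply/andP; split.
  by apply/forallP => k; rewrite ffunE.
rewrite leq_divRL // mulnC.
move: hp; rewrite big_ord_recl dx.
have -> : (\prod_(k < j) (h d k : nat) = \prod_(i < j) (d (lift ord0 i) : nat))%N by apply: eq_bigr => k _; rewrite ffunE.
done.
Qed.

Local Open Scope ring_scope.

Lemma prod3 j (F : 'I_j -> nat) : (\prod_(k < j) (3 * F k) = 3 ^ j * \prod_(k < j) F k)%N.
Proof. by rewrite big_split /= prod_nat_const card_ord. Qed.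

Theorem lemma2 (R : realType) (j : nat) (X : R) :
  (2 <= j)%N -> 1 <= X ->
  (X < 3 ^+ j -> Nstar j X = 0%N) /\
  (3 ^+ j <= X ->
     (Nstar j X)%:R <=
       ((j.-1)`!%:R)^-1 * (3^-1 * (2 / 3) ^+ j.-1 * X) *
       (ln (3^-1 * (2 / 3) ^+ j.-1 * X)) ^+ j.-1).
Proof.
move=> j2 X1.
have X0 : 0 <= X by lra.
split.
  move=> Xlt; apply/eqP; rewrite /Nstar cards_eq0; apply/eqP/setP => d.
  rewrite !inE; apply/negP => /andP[/forallP pos hp].
  have p1 : (0 < \prod_(k < j) (d k : nat))%N by apply: prodn_gt0.
  move: hp; rewrite prod3 => hp.
  have : (3 ^ j)%:R <= X.
    apply: le_trans hp; rewrite ler_nat leq_pmulr //.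
  by rewrite natrX; lra.
move=> Xge.
set M := Num.truncn X.
set K := (M %/ 3 ^ j)%N.
have M3 : (3 ^ j <= M)%N by rewrite /M truncn_ge_nat // natrX.
have K1 : (1 <= K)%N by rewrite /K leq_divRL ?expn_gt0 // mul1n.
have sub : (Nstar j X <= cnt j K)%N.
  apply: leq_trans (cardA (Num.truncn X).+1 j K).
  apply: subset_leq_card; apply/fintype.subsetP => d; rewrite !inE.
  case/andP => -> hp /=.
  rewrite /K leq_divRL ?expn_gt0 // mulnC -prod3.
  by rewrite /M truncn_ge_nat.
have [m jm] : exists m, j = m.+1 by exists j.-1; rewrite prednK // ltnW.
subst j; rewrite /=.
have h1 : (Nstar m.+1 X)%:R <= (cnt m.+1 K)%:R :> R by rewrite ler_nat.
apply: le_trans h1 _.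
apply: le_trans (@cnt_bound R m K K1) _.
set Y := 3^-1 * (2 / 3) ^+ m * X.
have p3 : 0 < 3 ^+ m.+1 :> R by rewrite exprn_gt0.
have eY : Y = 2 ^+ m * (X / 3 ^+ m.+1).
  rewrite /Y expr_div_n exprS; field.
  by rewrite expf_neq0.
have KX : K%:R <= X / 3 ^+ m.+1.
  rewrite ler_pdivlMr // -natrX -natrM.
  have tX : (M%:R : R) <= X by rewrite /M truncn_le.
  by apply: le_trans tX; rewrite ler_nat leq_trunc_div.
have p2p : 0 < 2 ^+ m :> R by rewrite exprn_gt0.
have KY : 2 ^+ m * K%:R <= Y by rewrite eY ler_pM2l.
have l1 : 1 <= 2 ^+ m * K%:R :> R.
  have e1 : 1 <= 2 ^+ m :> R by rewrite exprn_ege1 // ler1n.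
  have e2 : 1 <= K%:R :> R by rewrite ler1n.
  by apply: le_trans e2 _; rewrite ler_peMl // ler0n.
have -> : 2 ^+ m / m`!%:R * K%:R * ln (2 ^+ m * K%:R) ^+ m =
   (m`!%:R)^-1 * (2 ^+ m * K%:R) * ln (2 ^+ m * K%:R) ^+ m :> R by ring.
rewrite -2!(mulrA (m`!%:R)^-1) ler_wpM2l ?invr_ge0 ?ler0n //.
have l0 : 0 <= ln (2 ^+ m * K%:R : R) by rewrite ln_ge0.
have lY : ln (2 ^+ m * K%:R : R) <= ln Y.
  rewrite ler_ln ?posrE //; lra.
rewrite ler_pM //.
  by rewrite exprn_ge0.
by apply: lerXn2r; rewrite ?nnegrE //; apply: le_trans lY.
Qed.
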